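(* For every integer $k\ge1$ and real $u\ge k$, $$P_k(u)=\sum_{n_1>n_2>\cdots>n_k>0}\ \prod_{i=1}^{k}\frac{z_i^{n_i}}{n_i},\qquad z_i=1-\frac{1}{u-k+i}\quad(1\le i\le k),$$ the sum running over integers $n_1,\dots,n_k$.
   Context: The functions $P_k$ are defined by $P_0(u)=1$ for $u\ge 0$, and for integers $k\ge1$, $P_k:[k,\infty)\to\mathbb{R}$ is the function with $P_k(k)=0$ and $uP_k'(u)=P_{k-1}(u-1)$ for $u\ge k$, i.e. $P_k(u)=\int_k^u P_{k-1}(x-1)\,\frac{dx}{x}$. *)

(* Defs.v *)
From Stdlib Require Import Reals List.
From Coquelicot Require Import Coquelicot.
Open Scope R_scope.

Fixpoint P (k : nat) (u : R) : R :=
  match k with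
  | O => 1
  | S j => RInt (fun x => P j (x - 1) / x) (INR (S j)) u
  end.

Fixpoint sum_1_to (f : nat -> R) (N : nat) : R :=
  match N with
  | O => 0
  | S m => sum_1_to f m + f (S m)
  end.

(* Truncated multiple sum: for z = [z_1; ...; z_k],
   msum z N = sum over N >= n_1 > n_2 > ... > n_k > 0 of prod_i z_i^{n_i}/n_i
   (written as the nested sum; the empty product is 1). *)
Fixpoint msum (z : list R) (N : nat) : R :=
  match z with
  | nil => 1
  | a :: zs => sum_1_to (fun n => a ^ n / INR n * msum zs (n - 1)) N
  end.

Definition zlist (k : nat) (u : R) : list R :=
  map (fun i => 1 - 1 / (u - INR k + INR i)) (seq 1 k).

(* Main.v *)
Require Import Defs.
From Stdlib Require Import Reals List.
From Coquelicot Require Import Coquelicot.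
From Stdlib Require Import Lra Lia.
Open Scope R_scope.

Lemma s1_ext (f g : nat -> R) N :
  (forall n, (1 <= n <= N)%nat -> f n = g n) -> sum_1_to f N = sum_1_to g N.
Proof.
  induction N; intros H; simpl; auto.
  rewrite IHN; [ rewrite H; auto; lia | intros; apply H; lia].
Qed.

Lemma s1_le (f g : nat -> R) N :
  (forall n, (1 <= n <= N)%nat -> f n <= g n) -> sum_1_to f N <= sum_1_to g N.
Proof.
  induction N; intros H; simpl; [lra|].
  apply Rplus_le_compat; [apply IHN; intros; apply H; lia | apply H; lia].
Qed.

Lemma s1_plus (f g : nat -> R) N :
  sum_1_to (fun n => f n + g n) N = sum_1_to f N + sum_1_to g N.
Proof. induction N; simpl; [lra| rewrite IHN; lra]. Qed.

Lemma s1_scal (c : R) (f : nat -> R) N :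
  sum_1_to (fun n => c * f n) N = c * sum_1_to f N.
Proof. induction N; simpl; [lra| rewrite IHN; lra]. Qed.

Lemma s1_tele (g : nat -> R) N :
  sum_1_to (fun n => g (n-1)%nat - g n) N = g O - g N.
Proof.
  induction N; simpl; [lra|]. rewrite IHN. replace (N - 0)%nat with N by lia. lra.
Qed.

Lemma s1_zero (f : nat -> R) N : (forall n, (1 <= n <= N)%nat -> f n = 0) -> sum_1_to f N = 0.
Proof.
  intros H. rewrite (s1_ext f (fun _ => 0)) by auto. clear H.
  induction N; simpl; [lra| rewrite IHN; lra].
Qed.

Lemma s1_derive (F : R -> nat -> R) (dF : nat -> R) x N :
  (forall n, (1 <= n <= N)%nat -> is_derive (fun y => F y n) x (dF n)) ->
  is_derive (fun y => sum_1_to (F y) N) x (sum_1_to dF N).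
Proof.
  induction N; intros H; simpl.
  - exact (is_derive_const (K:=R_AbsRing) (V:=R_NormedModule) 0 x).
  - apply (is_derive_plus (fun y => sum_1_to (F y) N) (fun y => F y (S N))).
    + apply IHN; intros; apply H; lia.
    + apply H; lia.
Qed.

Lemma zlist_S k u : zlist (S k) u = (1 - 1 / (u - INR k)) :: zlist k u.
Proof.
  unfold zlist. change (seq 1 (S k)) with (1%nat :: seq 2 k). rewrite map_cons. f_equal.
  - f_equal. f_equal. rewrite S_INR. simpl (INR 1). lra.
  - rewrite <- seq_shift, map_map. apply map_ext. intros i.
    rewrite !S_INR. f_equal. f_equal. lra.
Qed.

Lemma msum_S k u N :
  msum (zlist (S k) u) N =
  sum_1_to (fun n => (1 - 1 / (u - INR k)) ^ n / INR n * msum (zlist k u) (n - 1)) N.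
Proof. rewrite zlist_S. reflexivity. Qed.

Lemma s1_geom (z : R) N : (1 - z) * sum_1_to (fun n => z ^ n) N = z - z ^ (S N).
Proof. induction N; simpl; [ring|]. rewrite Rmult_plus_distr_l, IHN. simpl. ring. Qed.

Lemma msum_bound (U : R) : 1 <= U -> forall zs,
  (forall z, In z zs -> 0 <= z <= 1 - 1 / U) ->
  forall N, 0 <= msum zs N <= U ^ length zs.
Proof.
  intros HU zs. induction zs as [|a zs IH]; intros Hz N; simpl.
  - lra.
  - assert (Ha : 0 <= a <= 1 - 1/U) by (apply Hz; simpl; auto).
    assert (IH' : forall N, 0 <= msum zs N <= U ^ length zs)
      by (intros; apply IH; intros; apply Hz; simpl; auto).
    assert (HUp : 0 < U) by lra.
    assert (Hpos : forall n, (1 <= n)%nat -> 0 <= a ^ n / INR n * msum zs (n-1)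
                  /\ a ^ n / INR n * msum zs (n-1) <= U ^ length zs * (1 - 1/U) ^ n).
    { intros n Hn. assert (HnR : 1 <= INR n) by (apply (le_INR 1); lia).
      destruct (IH' (n-1)%nat) as [H1 H2].
      assert (0 <= a ^ n) by (apply pow_le; lra).
      assert (a ^ n <= (1 - 1/U) ^ n) by (apply pow_incr; lra).
      assert (0 <= a ^ n / INR n <= a ^ n).
      { split. apply Rdiv_le_0_compat; lra.
        unfold Rdiv. rewrite <- (Rmult_1_r (a ^ n)) at 2. apply Rmult_le_compat_l; auto.
        rewrite <- Rinv_1. apply Rinv_le_contravar; lra. }
      split. apply Rmult_le_pos; lra.
      rewrite Rmult_comm. apply Rmult_le_compat; lra. }
    split.
    + rewrite <- (s1_zero (fun _ => 0) N) by auto. apply s1_le. intros; apply Hpos; lia.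
    + apply Rle_trans with (sum_1_to (fun n => U ^ length zs * (1 - 1/U) ^ n) N).
      apply s1_le; intros; apply Hpos; lia.
      rewrite s1_scal. rewrite Rmult_comm. apply Rmult_le_compat_r.
      apply pow_le; lra.
      pose proof (s1_geom (1 - 1/U) N) as G.
      replace (1 - (1 - 1/U)) with (/U) in G by (field; lra).
      assert (0 <= (1 - 1/U) ^ S N).
      { apply pow_le. assert (1/U <= 1). unfold Rdiv. rewrite Rmult_1_l. rewrite <- Rinv_1. apply Rinv_le_contravar; lra. lra. }
      assert (1/U > 0) by (unfold Rdiv; rewrite Rmult_1_l; apply Rinv_0_lt_compat; lra).
      apply (Rmult_le_reg_l (/U)). apply Rinv_0_lt_compat; lra.
      change (pow (1 - 1/U)) with (fun n => (1 - 1/U) ^ n). rewrite G. rewrite Rinv_l by lra. lra.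
Qed.

Lemma zlist_bound j x U : INR j <= x <= U ->
  forall z, In z (zlist j x) -> 0 <= z <= 1 - 1 / U.
Proof.
  intros Hx z Hz. unfold zlist in Hz. apply in_map_iff in Hz.
  destruct Hz as [i [Hi Hin]]. apply in_seq in Hin. subst z.
  assert (1 <= INR i) by (apply (le_INR 1); lia).
  assert (INR i <= INR j) by (apply le_INR; lia).
  set (t := x - INR j + INR i).
  assert (1 <= t) by (unfold t; lra). assert (t <= U) by (unfold t; lra).
  split.
  - assert (1 / t <= 1). unfold Rdiv. rewrite Rmult_1_l. rewrite <- Rinv_1. apply Rinv_le_contravar; lra. lra.
  - unfold Rdiv. rewrite !Rmult_1_l. assert (/ U <= / t) by (apply Rinv_le_contravar; lra). lra.
Qed.

Lemma zlist_length j x : length (zlist j x) = j.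
Proof. unfold zlist. rewrite length_map, length_seq. auto. Qed.

Lemma D_bound j x U N : 1 <= U -> INR j <= x <= U -> 0 <= msum (zlist j x) N <= U ^ j.
Proof.
  intros HU Hx. rewrite <- (zlist_length j x) at 3. apply msum_bound; auto.
  apply (zlist_bound j x U Hx).
Qed.

Lemma is_derive_eq (f : R -> R) x l l' : is_derive f x l -> l = l' -> is_derive f x l'.
Proof. intros H ->; exact H. Qed.

Lemma term_der c n u : u - c <> 0 -> (1 <= n)%nat ->
  is_derive (fun x => (1 - 1/(x - c))^n / INR n) u
    ((1/(u-c))^2 * (1 - 1/(u-c))^(n-1)).
Proof.
  intros Hu Hn. assert (HnR : INR n <> 0) by (apply not_0_INR; lia).
  auto_derive. lra.
  replace (Init.Nat.pred n) with (n-1)%nat by lia.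
  set (p := (1 + - (1 * / (u + - c))) ^ (n - 1)).
  replace ((1 - 1 / (u - c)) ^ (n - 1)) with p by (unfold p; f_equal; field; lra).
  field. lra.
Qed.

Lemma alg1 (u c jj am bm Am Bm Cm s : R) : u - c <> 0 -> u - jj <> 0 -> u <> 0 -> s <> 0 -> c = jj + 1 ->
  1 / (u - c) * (1 / (u - c) * 1) * am * Am +
  (1 - 1 / (u - c)) * am / s * (Bm / u - bm * Cm / (u - jj)) =
  (1 - 1 / (u - c)) * am / s * Bm * / u +
  1 / (u - c) *
  (am * Am -
   (1 - 1 / (u - c)) * am *
   (Am + (1 - 1 / (u - jj)) * bm / s * Cm)).
Proof. intros. subst c. field. repeat split; auto. Qed.

Lemma msum0 zs : zs <> nil -> msum zs 0 = 0.
Proof. destruct zs; [congruence| reflexivity]. Qed.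

Lemma Der j : forall N u, INR j < u ->
  is_derive (fun x => msum (zlist (S j) x) N) u
   (msum (zlist j (u-1)) N / u - (1 - 1/(u - INR j))^N * msum (zlist j u) N / (u - INR j)).
Proof.
  induction j as [|j IH]; intros N u Hu.
  -
    simpl INR in *. 
    apply is_derive_ext with (fun x => sum_1_to (fun n => (1 - 1/(x - 0))^n / INR n * 1) N).
    { intros t. rewrite msum_S. simpl INR. reflexivity. }
    set (a := 1 - 1/(u-0)).
    eapply is_derive_eq. apply (s1_derive (fun x n => (1 - 1/(x - 0))^n / INR n * 1)
             (fun n => (1/(u-0))^2 * a^(n-1) * 1)).
    + intros n Hn. 
      apply is_derive_ext with (fun x => (1 - 1/(x - 0))^n / INR n).
      { intros t; rewrite Rmult_1_r; reflexivity. }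
      replace ((1/(u-0))^2 * a^(n-1) * 1) with ((1/(u-0))^2 * a^(n-1)) by ring.
      apply term_der; [lra|lia].
    +
      rewrite (s1_ext _ (fun n => (1/(u-0)) * (a^(n-1) - a^n))).
      * rewrite s1_scal. rewrite (s1_tele (fun n => a ^ n)). simpl. 
        unfold a. field. lra.
      * intros n Hn. destruct n as [|m]; [lia|]. replace (S m - 1)%nat with m by lia.
        simpl pow. unfold a. field. lra.
  -
    set (c := INR (S j)).
    assert (Hc : c = INR j + 1) by (unfold c; apply S_INR).
    assert (Hu' : c < u) by (unfold c; exact Hu).
    assert (Hj0 : 0 <= INR j) by apply pos_INR.
    set (a := 1 - 1/(u - c)).
    set (b := 1 - 1/(u - INR j)).
    set (A := fun m => msum (zlist (S j) u) m).
    set (B := fun m => msum (zlist j (u-1)) m).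
    set (C := fun m => msum (zlist j u) m).
    apply is_derive_ext with (fun x => sum_1_to (fun n => (1 - 1/(x - c))^n / INR n * msum (zlist (S j) x) (n-1)) N).
    { intros t. rewrite msum_S. reflexivity. }
    eapply is_derive_eq. apply (s1_derive (fun x n => (1 - 1/(x - c))^n / INR n * msum (zlist (S j) x) (n-1))
             (fun n => (1/(u-c))^2 * a^(n-1) * A (n-1)%nat + a^n / INR n * (B (n-1)%nat / u - b^(n-1) * C (n-1)%nat / (u - INR j)))).
    + intros n Hn.
      eapply is_derive_eq. apply (is_derive_mult (fun x => (1 - 1/(x - c))^n / INR n) (fun x => msum (zlist (S j) x) (n-1))).
      * apply term_der; [lra|lia].
      * apply IH. lra.
      * intros; apply Rmult_comm.
      * unfold A, B, C, a, b. unfold mult, plus. cbn -[msum zlist pow INR Rdiv Rinv Rminus]. ring.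
    +
      rewrite (s1_ext _ (fun n => (a^n / INR n * B (n-1)%nat) * /u + (1/(u-c)) * (a^(n-1) * A (n-1)%nat - a^n * A n))).
      * rewrite s1_plus, s1_scal.
        rewrite (s1_tele (fun n => a ^ n * A n)).
        assert (HA0 : A O = 0) by (unfold A; apply msum0; rewrite zlist_S; congruence).
        rewrite HA0.
        assert (HB : sum_1_to (fun n => a ^ n / INR n * B (n - 1)%nat * / u) N = msum (zlist (S j) (u-1)) N / u).
        { rewrite msum_S. unfold Rdiv at 2. rewrite Rmult_comm. rewrite <- s1_scal.
          apply s1_ext. intros n _. unfold B, a.
          replace (u - 1 - INR j) with (u - c) by lra. ring. }
        rewrite HB. match goal with |- ?x = ?y => change (@eq R x y) end. field. lra.
      * intros n Hn. destruct n as [|m]; [lia|]. replace (S m - 1)%nat with m by lia.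
        assert (HAS : A (S m) = A m + b^(S m) / INR (S m) * C m).
        { unfold A, C. rewrite !msum_S. change (sum_1_to ?f (S m)) with (sum_1_to f m + f (S m)). cbv beta. replace (S m - 1)%nat with m by lia. reflexivity. }
        rewrite HAS.
        assert (HSm : INR (S m) <> 0) by (apply not_0_INR; lia).
        set (am := a ^ m). set (bm := b ^ m). simpl pow. fold am bm.
        unfold a, b. apply alg1; auto; lra.
Qed.

Lemma exD j N y : INR j - 1 < y -> ex_derive (fun x => msum (zlist j x) N) y.
Proof.
  destruct j as [|i]; intros Hy.
  - simpl. apply ex_derive_const.
  - eexists. apply Der. rewrite S_INR in Hy. lra.
Qed.

Definition dfun j N x := msum (zlist j (x-1)) N / x - (1 - 1/(x - INR j))^N * msum (zlist j x) N / (x - INR j).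

Lemma exd_minus (f g : R -> R) x : ex_derive f x -> ex_derive g x -> ex_derive (fun y => f y - g y) x.
Proof. intros; exact (ex_derive_minus f g x H H0). Qed.
Lemma exd_div (f g : R -> R) x : ex_derive f x -> ex_derive g x -> g x <> 0 -> ex_derive (fun y => f y / g y) x.
Proof. intros; exact (ex_derive_div f g x H H0 H1). Qed.
Lemma exd_mult (f g : R -> R) x : ex_derive f x -> ex_derive g x -> ex_derive (fun y => f y * g y) x.
Proof. intros; exact (ex_derive_mult f g x H H0). Qed.
Lemma exd_id x : ex_derive (fun y : R => y) x.
Proof. exact (ex_derive_id (K:=R_AbsRing) x). Qed.
Lemma exd_const (a : R) x : ex_derive (fun _ : R => a) x.
Proof. exact (ex_derive_const (K:=R_AbsRing) (V:=R_NormedModule) a x). Qed.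
Lemma exd_shift x (c : R) : ex_derive (fun y : R => y - c) x.
Proof. apply exd_minus; [apply exd_id | apply exd_const]. Qed.

Lemma exdfun j N x : INR j + 1 <= x -> ex_derive (dfun j N) x.
Proof.
  intros Hx. assert (0 <= INR j) by apply pos_INR. unfold dfun.
  apply exd_minus.
  - apply exd_div.
    + apply (ex_derive_comp (fun y => msum (zlist j y) N) (fun x => x - 1)).
      * apply exD. lra.
      * apply exd_shift.
    + apply exd_id.
    + lra.
  - apply exd_div.
    + apply exd_mult.
      * apply ex_derive_pow. apply exd_minus. apply exd_const.
        apply exd_div. apply exd_const. apply exd_shift. lra.
      * apply exD. lra.
    + apply exd_shift.
    + lra.
Qed.

Lemma Dk_at_k j N : msum (zlist (S j) (INR (S j))) N = 0.
Proof.
  rewrite msum_S. apply s1_zero. intros n Hn.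
  replace (1 - 1 / (INR (S j) - INR j)) with 0 by (rewrite S_INR; replace (INR j + 1 - INR j) with 1 by ring; field).
  rewrite pow_i by lia. unfold Rdiv. rewrite !Rmult_0_l. reflexivity.
Qed.

Lemma FTC j N u : INR (S j) <= u -> msum (zlist (S j) u) N = RInt (dfun j N) (INR (S j)) u.
Proof.
  intros Hu. symmetry. apply is_RInt_unique.
  assert (H0 : 0 <= INR j) by apply pos_INR. assert (HS := S_INR j).
  replace (msum (zlist (S j) u) N) with (minus (msum (zlist (S j) u) N) (msum (zlist (S j) (INR (S j))) N)).
  2:{ rewrite Dk_at_k. unfold minus, plus, opp; simpl. ring. }
  apply (is_RInt_derive (fun x => msum (zlist (S j) x) N) (dfun j N)).
  - intros x Hx. rewrite Rmin_left, Rmax_right in Hx by lra. apply Der. lra.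
  - intros x Hx. rewrite Rmin_left, Rmax_right in Hx by lra. apply (ex_derive_continuous (K:=R_AbsRing) (V:=R_NormedModule)).
    apply exdfun. lra.
Qed.

Lemma exP m : forall y, INR m - 1 < y -> ex_derive (P m) y.
Proof.
  induction m as [|m IH]; intros y Hy.
  - apply exd_const.
  - assert (H0 : 0 <= INR m) by apply pos_INR. rewrite S_INR in Hy.
    set (g := fun x => P m (x - 1) / x).
    assert (Hg : forall z, INR m < z -> ex_derive g z).
    { intros z Hz. unfold g. apply exd_div.
      - apply (ex_derive_comp (P m) (fun x => x - 1)). apply IH. lra. apply exd_shift.
      - apply exd_id.
      - lra. }
    exists (g y).
    change (is_derive (fun b => RInt g (INR (S m)) b) y (g y)).
    apply (is_derive_RInt g (fun b => RInt g (INR (S m)) b) (INR (S m))).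
    + apply (locally_interval _ y (INR m) p_infty). { simpl. lra. } { simpl. exact I. }
      intros t Ht _. simpl in Ht. apply (RInt_correct (V:=R_CompleteNormedModule)). apply (ex_RInt_continuous (V:=R_CompleteNormedModule)).
      intros z Hz. apply (ex_derive_continuous (K:=R_AbsRing) (V:=R_NormedModule)). apply Hg.
      rewrite S_INR in Hz. destruct (Rle_dec t (INR m + 1)).
      * rewrite Rmin_right in Hz by lra. lra.
      * rewrite Rmin_left in Hz by lra. lra.
    + apply (ex_derive_continuous (K:=R_AbsRing) (V:=R_NormedModule)). apply Hg. lra.
Qed.

Lemma exg j z : INR j < z -> ex_derive (fun x => P j (x - 1) / x) z.
Proof.
  intros Hz. assert (0 <= INR j) by apply pos_INR. apply exd_div.
  - apply (ex_derive_comp (P j) (fun x => x - 1)). apply exP. lra. apply exd_shift.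
  - apply exd_id.
  - lra.
Qed.

Lemma Unif j : forall U eps, 0 < eps -> exists N0, forall N, (N0 <= N)%nat ->
  forall u, INR j <= u <= U -> Rabs (msum (zlist j u) N - P j u) <= eps.
Proof.
  induction j as [|j IH]; intros U eps Heps.
  - exists O. intros N _ u _. simpl. rewrite Rminus_diag, Rabs_R0. lra.
  - assert (HS := S_INR j). assert (Hj0 : 0 <= INR j) by apply pos_INR.
    destruct (Rlt_dec U (INR (S j))) as [HU|HU].
    { exists O. intros N _ u Hu. lra. }
    assert (HU1 : 1 <= U) by lra.
    set (e1 := eps / (2 * U)).
    assert (He1 : 0 < e1) by (unfold e1; apply Rdiv_lt_0_compat; lra).
    destruct (IH U e1 He1) as [N1 HN1].
    set (r := 1 - 1 / (U - INR j)).
    assert (Hr : 0 <= r < 1).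
    { unfold r. assert (0 < 1 / (U - INR j)) by (apply Rdiv_lt_0_compat; lra).
      assert (1 / (U - INR j) <= 1).
      { unfold Rdiv. rewrite Rmult_1_l. rewrite <- Rinv_1. apply Rinv_le_contravar; lra. }
      lra. }
    assert (HUj : 0 < U ^ j) by (apply pow_lt; lra).
    set (dl := eps / (2 * U * U ^ j)).
    assert (Hdl : 0 < dl) by (unfold dl; apply Rdiv_lt_0_compat; [lra| apply Rmult_lt_0_compat; lra]).
    destruct (pow_lt_1_zero r ltac:(rewrite Rabs_pos_eq; lra) dl Hdl) as [N2 HN2].
    exists (Nat.max N1 N2). intros N HN u Hu.
    rewrite FTC by lra.
    change (P (S j) u) with (RInt (fun x => P j (x - 1) / x) (INR (S j)) u).
    assert (Ex1 : ex_RInt (dfun j N) (INR (S j)) u).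
    { apply (ex_RInt_continuous (V:=R_CompleteNormedModule)). intros z Hz.
      rewrite Rmin_left, Rmax_right in Hz by lra.
      apply (ex_derive_continuous (K:=R_AbsRing) (V:=R_NormedModule)). apply exdfun. lra. }
    assert (Ex2 : ex_RInt (fun x => P j (x - 1) / x) (INR (S j)) u).
    { apply (ex_RInt_continuous (V:=R_CompleteNormedModule)). intros z Hz.
      rewrite Rmin_left, Rmax_right in Hz by lra.
      apply (ex_derive_continuous (K:=R_AbsRing) (V:=R_NormedModule)). apply exg. lra. }
    assert (Hm := RInt_minus _ _ _ _ Ex1 Ex2).
    assert (Hex := ex_RInt_minus _ _ _ _ Ex1 Ex2).
    change (RInt (dfun j N) (INR (S j)) u - RInt (fun x => P j (x - 1) / x) (INR (S j)) u)
      with (minus (RInt (dfun j N) (INR (S j)) u) (RInt (fun x => P j (x - 1) / x) (INR (S j)) u)).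
    rewrite <- Hm.
    apply Rle_trans with ((u - INR (S j)) * (e1 + dl * U ^ j)).
    + apply abs_RInt_le_const; [lra | exact Hex |].
      intros t Ht.
      assert (Ht1 : INR j <= t - 1 <= U) by lra.
      assert (HP := HN1 N ltac:(lia) (t - 1) Ht1).
      set (X := msum (zlist j (t - 1)) N - P j (t - 1)).
      set (rt := 1 - 1 / (t - INR j)).
      set (Ct := msum (zlist j t) N).
      assert (HC : 0 <= Ct <= U ^ j) by (apply D_bound; lra).
      assert (Hrt : 0 <= rt <= r).
      { unfold rt, r. assert (0 < 1 / (t - INR j)) by (apply Rdiv_lt_0_compat; lra).
        assert (1 / (t - INR j) <= 1).
        { unfold Rdiv. rewrite Rmult_1_l. rewrite <- Rinv_1. apply Rinv_le_contravar; lra. }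
        assert (1 / (U - INR j) <= 1 / (t - INR j)).
        { unfold Rdiv. rewrite !Rmult_1_l. apply Rinv_le_contravar; lra. }
        lra. }
      assert (Hpow : rt ^ N <= dl).
      { apply Rle_trans with (r ^ N). apply pow_incr; lra.
        assert (H2 := HN2 N ltac:(lia)). rewrite Rabs_pos_eq in H2 by (apply pow_le; lra). lra. }
      assert (Hpow0 : 0 <= rt ^ N) by (apply pow_le; lra).
      cbv beta. match goal with |- Rabs ?e <= _ => replace e with (X / t - rt ^ N * Ct / (t - INR j)) end.
      2:{ unfold minus, plus, opp, dfun, X, rt, Ct. simpl. field. lra. }
      apply Rle_trans with (Rabs (X / t) + Rabs (rt ^ N * Ct / (t - INR j))).
      { assert (Htr : forall a b, Rabs (a - b) <= Rabs a + Rabs b) by (intros a b; unfold Rminus; rewrite <- (Rabs_Ropp b); apply Rabs_triang). apply Htr. }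
      apply Rplus_le_compat.
      * unfold Rdiv. rewrite Rabs_mult. rewrite (Rabs_pos_eq (/ t)) by (left; apply Rinv_0_lt_compat; lra).
        assert (/ t <= 1) by (rewrite <- Rinv_1; apply Rinv_le_contravar; lra).
        assert (0 < / t) by (apply Rinv_0_lt_compat; lra).
        fold X in HP. assert (0 <= Rabs X) by apply Rabs_pos.
        apply Rle_trans with (Rabs X * 1). apply Rmult_le_compat_l; lra. lra.
      * assert (Hq : 0 < / (t - INR j) <= 1).
        { split. apply Rinv_0_lt_compat; lra. rewrite <- Rinv_1; apply Rinv_le_contravar; lra. }
        unfold Rdiv. rewrite Rabs_pos_eq.
        2:{ apply Rmult_le_pos; [apply Rmult_le_pos|]; lra. }
        apply Rle_trans with (dl * U ^ j * 1).
        apply Rmult_le_compat; try lra. apply Rmult_le_pos; lra.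
        apply Rmult_le_compat; lra.
        lra.
    + assert (Hlen : 0 <= u - INR (S j) <= U) by lra.
      assert (Hsum : 0 <= e1 + dl * U ^ j).
      { assert (0 <= dl * U ^ j) by (apply Rmult_le_pos; lra). lra. }
      apply Rle_trans with (U * (e1 + dl * U ^ j)).
      apply Rmult_le_compat_r; lra.
      unfold e1, dl. right. field. split; lra.
Qed.

Theorem theorem3 (k : nat) (u : R) :
  (1 <= k)%nat -> INR k <= u ->
  is_lim_seq (fun N : nat => msum (zlist k u) N) (P k u).
Proof.
  intros _ Hu. apply is_lim_seq_spec. intros eps.
  destruct (Unif k u (eps / 2) ltac:(destruct eps; simpl; lra)) as [N0 HN0].
  exists N0. intros N HN. assert (H := HN0 N HN u ltac:(lra)).
  destruct eps; simpl in *. lra.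
Qed.
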